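(* Let $G\in\mathcal{F}$, let $C$ be a clique of maximum size in $G$ chosen among all maximum cliques so that the number of edges with exactly one endpoint in $C$ is minimal, and let $X,Y$ be a partition of the vertex set of $C$ into two nonempty sets such that every vertex outside $C$ has its set of neighbors in $C$ equal to $X$, $Y$ or $\emptyset$. Let $a=|X|$, $b=|Y|$, let $\Gamma X$ (resp. $\Gamma Y$) be the set of vertices outside $C$ whose neighborhood in $C$ is $X$ (resp. $Y$), and let $G[\Gamma X]$, $G[\Gamma Y]$ be the induced subgraphs. Then, for some nonnegative integers $l,k,m$: (i) if $b=1$ (resp. $a=1$), then $G[\Gamma X]=lK_1$ (resp. $G[\Gamma Y]=lK_1$); (ii) if $b=2$ (resp. $a=2$), then $G[\Gamma X]=lK_1\cup kK_2$ (resp. $G[\Gamma Y]=lK_1\cup kK_2$); (iii) if $b=3$ (resp. $a=3$), then $G[\Gamma X]=lK_1\cup kK_2\cup mK_3$ (resp. $G[\Gamma Y]=lK_1\cup kK_2\cup mK_3$); (iv) if $b\geq 4$ (resp. $a\geq 4$), then $G[\Gamma X]=lK_1\cup kK_2$ (resp. $G[\Gamma Y]=lK_1\cup kK_2$).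
   Context: Graphs are finite and simple; spectrum means adjacency spectrum. $\mathcal{F}$ denotes the set of connected graphs whose spectrum consists of exactly one eigenvalue $r>2$, exactly one eigenvalue $s<-1$, and all remaining eigenvalues (with multiplicity) equal to $2$ or $-1$. For such $G$ and $C$ a partition $X,Y$ as described exists. $lK_1\cup kK_2\cup mK_3$ denotes the disjoint union of $l$ isolated vertices, $k$ edges and $m$ triangles. *)

(* Defs.v *)
From mathcomp Require Import all_boot all_order all_algebra all_field.
Set Implicit Arguments. Unset Strict Implicit. Unset Printing Implicit Defensive.
Import Order.TTheory GRing.Theory Num.Theory.

Definition simple_graph (n : nat) (e : rel 'I_n) : Prop :=
  symmetric e /\ irreflexive e.

Definition connected_graph (n : nat) (e : rel 'I_n) : Prop :=
  forall x y : 'I_n, connect e x y.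

Definition adj_mx (n : nat) (e : rel 'I_n) : 'M[algC]_n :=
  \matrix_(i, j) (e i j)%:R%R.

(* G in F: adjacency spectrum (with multiplicity) is
   {r, s, 2^p, (-1)^q} with r > 2, s < -1 *)
Definition in_F (n : nat) (e : rel 'I_n) : Prop :=
  simple_graph e /\ connected_graph e /\
  exists (r s : algC) (p q : nat),
    (2 < r)%R /\ (s < -1)%R /\
    char_poly (adj_mx e) =
      (('X - r%:P) * ('X - s%:P) * ('X - 2%:P) ^+ p * ('X + 1) ^+ q)%R.

Definition is_clique (n : nat) (e : rel 'I_n) (C : {set 'I_n}) : bool :=
  [forall x in C, forall y in C, (x != y) ==> e x y].

Definition max_clique (n : nat) (e : rel 'I_n) (C : {set 'I_n}) : Prop :=
  is_clique e C /\ forall D : {set 'I_n}, is_clique e D -> #|D| <= #|C|.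

Definition cut_size (n : nat) (e : rel 'I_n) (C : {set 'I_n}) : nat :=
  #|[set p : 'I_n * 'I_n | [&& p.1 \in C, p.2 \notin C & e p.1 p.2]]|.

Definition nbhd_in (n : nat) (e : rel 'I_n) (C : {set 'I_n}) (v : 'I_n) :=
  [set u in C | e v u].

Definition Gamma (n : nat) (e : rel 'I_n) (C X : {set 'I_n}) : {set 'I_n} :=
  [set v | (v \notin C) && (nbhd_in e C v == X)].

(* the induced subgraph G[S] is isomorphic to l K1 \cup k K2 \cup m K3:
   S is partitioned into blocks, each a clique of size 1, 2 or 3, with
   no edges between distinct blocks, and exactly l (resp. k, m) blocks
   of size 1 (resp. 2, 3). *)
Definition union_K123 (n : nat) (e : rel 'I_n) (S : {set 'I_n})
    (l k m : nat) : Prop :=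
  exists P : {set {set 'I_n}},
    [/\ partition P S,
        (forall B, B \in P -> is_clique e B && (0 < #|B| <= 3)),
        (forall B1 B2, B1 \in P -> B2 \in P -> B1 != B2 ->
           forall x y, x \in B1 -> y \in B2 -> ~~ e x y) &
        [/\ #|[set B in P | #|B| == 1]| = l,
            #|[set B in P | #|B| == 2]| = k &
            #|[set B in P | #|B| == 3]| = m]].

(* Main.v *)
Require Import Defs.
From mathcomp Require Import all_boot all_order all_algebra all_field.
From mathcomp Require Import ring.
Import Order.TTheory GRing.Theory Num.Theory Num.Def.
Set Implicit Arguments. Unset Strict Implicit. Unset Printing Implicit Defensive.

Open Scope ring_scope.

Definition qf n (M : 'M[algC]_n) (u w : 'rV[algC]_n) : algC :=
  (u *m M *m map_mx conjC w^T) 0 0.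

Lemma qf_diag n (M P : 'M[algC]_n) (d : 'rV[algC]_n) (z z' : 'rV[algC]_n) :
  P \is unitarymx -> M = invmx P *m diag_mx d *m P ->
  qf M z z' = \sum_j d 0 j * ((z *m map_mx conjC P^T) 0 j *
                 conjC ((z' *m map_mx conjC P^T) 0 j)).
Proof.
move=> Pu ->; rewrite /qf invmx_unitary // !mulmxA -[_ *m P *m _]mulmxA.
have -> : P *m map_mx conjC z'^T = map_mx conjC (z' *m map_mx conjC P^T)^T.
  by rewrite trmx_mul map_mxM trmxCK.
rewrite mxE; apply: eq_bigr => j _.
by rewrite mul_mx_diag !mxE [_ * d 0 j]mulrC -mulrA.
Qed.

Lemma qf_comb n (M : 'M[algC]_n) a b u w :
  qf M (a *: u + b *: w) (a *: u + b *: w) =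
  a * conjC a * qf M u u + a * conjC b * qf M u w
  + (b * conjC a * qf M w u + b * conjC b * qf M w w).
Proof.
rewrite /qf !(linearD, linearZ, map_mxD, map_mxZ, mulmxDl, mulmxDr, scalemxAl, scalemxAr) /=.
by rewrite -!scalemxAl !mxE; ring.
Qed.

Lemma no_two_neg n (M P : 'M[algC]_n) (d : 'rV[algC]_n) :
  P \is unitarymx -> M = invmx P *m diag_mx d *m P ->
  (forall j, d 0 j \is Num.real) ->
  (forall j1 j2, d 0 j1 < 0 -> d 0 j2 < 0 -> j1 = j2) ->
  forall u w, qf M u w = 0 -> qf M w u = 0 -> qf M u u < 0 -> qf M w w < 0 -> False.
Proof.
move=> Pu defM dR d1 u w huw hwu hu hw.
pose Y := fun z : 'rV_n => z *m map_mx conjC P^T.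
have nonneg : forall z j0, (forall j, j != j0 -> 0 <= d 0 j) -> (Y z) 0 j0 = 0 ->
    0 <= qf M z z.
  move=> z j0 H Hz; rewrite (qf_diag _ _ Pu defM); apply: sumr_ge0 => j _.
  case: (eqVneq j j0) => [->|njj0]; first by rewrite /Y in Hz; rewrite Hz mul0r mulr0.
  by apply: mulr_ge0; [apply: H | apply: mul_conjC_ge0].
have [j0 Hj0 | allpos] := pickP (fun j => d 0 j < 0).
- have H : forall j, j != j0 -> 0 <= d 0 j.
    move=> j njj0; rewrite real_leNgt ?dR ?real0 //; apply/negP => dj.
    by move/eqP: njj0; apply; exact: d1.
  case: (eqVneq ((Y u) 0 j0) 0) => [yu0|yu0].
    by have := nonneg u j0 H yu0; move/le_gtF; rewrite hu.
  pose a := (Y w) 0 j0; pose b := - (Y u) 0 j0.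
  have := nonneg (a *: u + b *: w) j0 H.
  have e0 : forall (A B : 'rV_n), (a *: A + b *: B) 0 j0 = a * A 0 j0 + b * B 0 j0.
    by move=> A B; rewrite !mxE.
  have eY : Y (a *: u + b *: w) = a *: Y u + b *: Y w.
    by rewrite /Y mulmxDl -!scalemxAl.
  rewrite eY e0 /a /b mulNr mulrC subrr => /(_ erefl).
  rewrite qf_comb huw hwu !mulr0 addr0 add0r.
  have h1 : (Y w) 0 j0 * conjC ((Y w) 0 j0) * qf M u u <= 0.
    by apply: mulr_ge0_le0; [apply: mul_conjC_ge0 | apply: ltW].
  have h2 : - (Y u) 0 j0 * conjC (- (Y u) 0 j0) * qf M w w < 0.
    by rewrite pmulr_rlt0 ?mul_conjC_gt0 ?oppr_eq0.
  by have := ler_ltD h1 h2; rewrite addr0 => /lt_geF ->.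
- have : 0 <= qf M u u.
    rewrite (qf_diag _ _ Pu defM); apply: sumr_ge0 => j _.
    apply: mulr_ge0; last by apply: mul_conjC_ge0.
    by rewrite real_leNgt ?dR ?real0 // allpos.
  by move/le_gtF; rewrite hu.
Qed.

Lemma char_poly_sim n (P B : 'M[algC]_n) : P \in unitmx ->
  char_poly (invmx P *m B *m P) = char_poly B.
Proof.
move=> Pu; rewrite /char_poly /char_poly_mx !map_mxM.
have eX : ('X%:M : 'M[{poly algC}]_n) =
    map_mx polyC (invmx P) *m 'X%:M *m map_mx polyC P.
  by rewrite scalar_mxC -mulmxA -map_mxM mulVmx // map_mx1 mulmx1.
rewrite [X in \det (X - _)]eX -mulmxBl -mulmxBr !det_mulmx mulrC mulrA.
by rewrite -det_mulmx -map_mxM ?mulVmx ?mulmxV // map_mx1 det1 mul1r.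
Qed.


Lemma adj_herm n (e : rel 'I_n) : symmetric e ->
  map_mx conjC (adj_mx e)^T = adj_mx e.
Proof.
move=> se; apply/matrixP => i j; rewrite !mxE.
by rewrite se; case: (e i j); rewrite ?conjC1 ?conjC0.
Qed.

Lemma F_spec n (e : rel 'I_n) : in_F e ->
  exists (P : 'M[algC]_n) (d : 'rV[algC]_n) (r s : algC),
   [/\ P \is unitarymx, adj_mx e = invmx P *m diag_mx d *m P, 2 < r, s < -1 &
     [/\ (forall j, [\/ d 0 j = r, d 0 j = s, d 0 j = 2 | d 0 j = -1]),
       (forall j1 j2, d 0 j1 = s -> d 0 j2 = s -> j1 = j2) &
       (forall j1 j2, d 0 j1 = r -> d 0 j2 = r -> j1 = j2)]].
Proof.
case=> [[se ie]] [_] [r] [s] [p] [q] [r2] [s1] cp.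
set A := adj_mx e in cp *.
have An : A \is normalmx.
  by apply/normalmxP; rewrite /A adj_herm.
have defA := orthomx_spectralP An.
set P := spectralmx A in defA; set d := spectral_diag A in defA.
have Pu : P \is unitarymx by apply: spectral_unitarymx.
exists P, d, r, s.
have cpd : \prod_(i < n) ('X - (d 0 i)%:P) =
    ('X - r%:P) * ('X - s%:P) * ('X - 2%:P) ^+ p * ('X + 1) ^+ q.
  rewrite -cp defA char_poly_sim ?unitarymx_unit // char_poly_trig ?diag_mx_is_trig //.
  by apply: eq_bigr => i _; rewrite !mxE eqxx mulr1n.
have m12 : (-1 : algC) < 2 by rewrite (lt_trans (ltrN10 _)) // ltr0n.
have sr : s < r by rewrite (lt_trans s1) // (lt_trans m12).
have s2 : s < 2 by rewrite (lt_trans s1).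
have m1r : -1 < r by rewrite (lt_trans m12).
have neq : forall x y : algC, x < y -> (x == y) = false /\ (y == x) = false.
  by move=> x y /lt_eqF xy; split => //; rewrite eq_sym.
have rootQ : forall a b x : algC,
    root (('X - a%:P) * ('X - b%:P) * ('X - 2%:P) ^+ p * ('X + 1) ^+ q) x ->
    [\/ x = a, x = b, x = 2 | x = -1].
  move=> a b x; rewrite /root !hornerE !mulf_eq0 !expf_eq0 !subr_eq0 addr_eq0.
  case/orP => [/orP [/orP [/eqP -> | /eqP ->] | /andP [_ /eqP ->]] | /andP [_ /eqP ->]].
  - by constructor 1.
  - by constructor 2.
  - by constructor 3.
  - by constructor 4.
have uniq2 : forall a b : algC, b != a -> b != 2 -> b != -1 ->
    ('X - r%:P) * ('X - s%:P) * ('X - 2%:P) ^+ p * ('X + 1) ^+ q = 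
      ('X - b%:P) * (('X - a%:P) * ('X - 2%:P) ^+ p * ('X + 1) ^+ q) ->
    forall j1 j2, d 0 j1 = b -> d 0 j2 = b -> j1 = j2.
  move=> a b ba b2 b1 eQ j1 j2 h1 h2; apply/eqP/negPn/negP => j12.
  have := cpd; rewrite (bigD1 j1) //= (bigD1 j2) 1?eq_sym //= h1 h2 eQ.
  move/(mulfI (negbT (polyXsubC_eq0 b))) => eR.
  have : root (('X - a%:P) * ('X - 2%:P) ^+ p * ('X + 1) ^+ q) b.
    by rewrite -eR rootM root_XsubC eqxx.
  rewrite /root !hornerE !mulf_eq0 !expf_eq0 !subr_eq0 addr_eq0.
  by rewrite (negbTE ba) (negbTE b2) (negbTE b1) !andbF.
have [sr1 sr2] := neq _ _ sr.
have [s21 s22] := neq _ _ s2.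
have [s11 s12] := neq _ _ s1.
have [r11 r12] := neq _ _ m1r.
have [r21 r22] := neq _ _ r2.
split => //; split.
- move=> j; apply: rootQ; rewrite -cpd.
  by rewrite (bigD1 j) //= rootM root_XsubC eqxx.
- by apply: (uniq2 r); rewrite ?sr1 ?s21 ?s11 // -!mulrA mulrCA.
- by apply: (uniq2 s); rewrite ?sr2 ?r12 ?r22 ?r11 // -!mulrA.
Qed.

Lemma conj_shift n (P D : 'M[algC]_n) (c : algC) : P \in unitmx ->
  invmx P *m (D + c%:M) *m P = invmx P *m D *m P + c%:M.
Proof.
move=> Pu; rewrite mulmxDr mulmxDl; congr (_ + _).
by rewrite scalar_mxC -mulmxA mulVmx // mulmx1.
Qed.

Lemma lower_bound n (e : rel 'I_n) : in_F e -> forall u w,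
  qf (adj_mx e + 1%:M) u w = 0 -> qf (adj_mx e + 1%:M) w u = 0 ->
  qf (adj_mx e + 1%:M) u u < 0 -> qf (adj_mx e + 1%:M) w w < 0 -> False.
Proof.
move=> /F_spec [P [d [r [s [Pu defA r2 s1 [mem us ur]]]]]].
have r0 : 0 < r by rewrite (lt_trans _ r2) // ltr0n.
have s0 : s < 0 by rewrite (lt_trans s1) // ltrN10.
have dR : forall j, d 0 j \is Num.real.
  move=> j; case: (mem j) => ->; [exact: gtr0_real | exact: ltr0_real | exact: realn | by rewrite rpredN rpred1].
apply: (@no_two_neg n _ P (\row_j (d 0 j + 1))) => //.
- rewrite defA -conj_shift ?unitarymx_unit //; congr (_ *m _ *m _).
  by apply/matrixP => i j; rewrite !mxE; case: eqP => [->|]; rewrite ?mulr1n ?mulr0n ?addr0.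
- by move=> j; rewrite mxE rpredD ?dR ?rpred1.
- move=> j1 j2; rewrite !mxE => h1 h2; apply: us.
  + case: (mem j1) h1 => -> //.
    * by rewrite lt_gtF // addr_gt0.
    * by rewrite lt_gtF // addr_gt0 ?ltr0n.
    * by rewrite addNr ltxx.
  + case: (mem j2) h2 => -> //.
    * by rewrite lt_gtF // addr_gt0.
    * by rewrite lt_gtF // addr_gt0 ?ltr0n.
    * by rewrite addNr ltxx.
Qed.

Lemma upper_bound n (e : rel 'I_n) : in_F e -> forall u w,
  qf (2%:M - adj_mx e) u w = 0 -> qf (2%:M - adj_mx e) w u = 0 ->
  qf (2%:M - adj_mx e) u u < 0 -> qf (2%:M - adj_mx e) w w < 0 -> False.
Proof.
move=> /F_spec [P [d [r [s [Pu defA r2 s1 [mem us ur]]]]]].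
have r0 : 0 < r by rewrite (lt_trans _ r2) // ltr0n.
have s0 : s < 0 by rewrite (lt_trans s1) // ltrN10.
have dR : forall j, d 0 j \is Num.real.
  move=> j; case: (mem j) => ->; [exact: gtr0_real | exact: ltr0_real | exact: realn | by rewrite rpredN rpred1].
apply: (@no_two_neg n _ P (\row_j (2 - d 0 j))) => //.
- have -> : diag_mx (\row_j (2 - d 0 j)) = - diag_mx d + 2%:M.
    by apply/matrixP => i j; rewrite !mxE mulrnBl addrC.
  by rewrite conj_shift ?unitarymx_unit // mulmxN mulNmx defA addrC.
- by move=> j; rewrite mxE rpredB ?dR ?realn.
- move=> j1 j2; rewrite !mxE => h1 h2; apply: ur.
  + case: (mem j1) h1 => -> //.
    * by rewrite lt_gtF // subr_gt0 (lt_trans s1) // (lt_trans (ltrN10 _)) // ltr0n.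
    * by rewrite subrr ltxx.
    * by rewrite lt_gtF // opprK addr_gt0 ?ltr0n.
  + case: (mem j2) h2 => -> //.
    * by rewrite lt_gtF // subr_gt0 (lt_trans s1) // (lt_trans (ltrN10 _)) // ltr0n.
    * by rewrite subrr ltxx.
    * by rewrite lt_gtF // opprK addr_gt0 ?ltr0n.
Qed.


Definition zrow n k (vs : 'I_k -> 'I_n) (c : 'I_k -> int) : 'rV[algC]_n :=
  \row_a \sum_(i < k) (c i)%:~R * (vs i == a)%:R.

Lemma sum_delta n (x : 'I_n) (F : 'I_n -> algC) :
  \sum_a (x == a)%:R * F a = F x.
Proof.
rewrite (bigD1 x) //= eqxx mul1r big1 ?addr0 // => a /negbTE.
by rewrite eq_sym => ->; rewrite mul0r.
Qed.

Lemma qf_zrow n k (M : 'M[algC]_n) vs (c c' : 'I_k -> int) :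
  qf M (zrow vs c) (zrow vs c') =
  \sum_(i < k) \sum_(j < k) (c i)%:~R * (c' j)%:~R * M (vs i) (vs j).
Proof.
rewrite /qf /zrow mxE.
have e1 : forall b, ((\row_a \sum_(i < k) (c i)%:~R * (vs i == a)%:R) *m M) 0 b
    = \sum_(i < k) (c i)%:~R * M (vs i) b.
  move=> b; rewrite mxE.
  under eq_bigr => a _ do rewrite mxE mulr_suml.
  rewrite exchange_big /=; apply: eq_bigr => i _.
  under eq_bigr => a _ do rewrite -mulrA.
  by rewrite -mulr_sumr sum_delta.
under eq_bigr => b _ do rewrite e1 !mxE rmorph_sum mulr_suml.
rewrite exchange_big /=; apply: eq_bigr => i _.
under eq_bigr => b _ do rewrite mulr_sumr.
rewrite exchange_big /=; apply: eq_bigr => j _.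
have rearr : forall x y z w : algC, x * y * (z * w) = x * z * (w * y).
  by move=> *; ring.
under eq_bigr => b _ do rewrite rmorphM /= rmorph_int rmorph_nat rearr.
by rewrite -mulr_sumr sum_delta.
Qed.

Lemma sum_int_cast k (c c' : 'I_k -> int) (N : 'I_k -> 'I_k -> int) :
  \sum_(i < k) \sum_(j < k) (c i)%:~R * (c' j)%:~R * (N i j)%:~R =
  ((\sum_(i < k) \sum_(j < k) c i * c' j * N i j)%:~R : algC).
Proof.
rewrite rmorph_sum; apply: eq_bigr => i _; rewrite rmorph_sum.
by apply: eq_bigr => j _; rewrite !rmorphM.
Qed.

Definition Nlow k (pe : 'I_k -> 'I_k -> bool) (i j : 'I_k) : int :=
  (pe i j)%:R + (i == j)%:R.
Definition Nup k (pe : 'I_k -> 'I_k -> bool) (i j : 'I_k) : int :=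
  (i == j)%:R *+ 2 - (pe i j)%:R.

Lemma lower_cert n (e : rel 'I_n) k (vs : 'I_k -> 'I_n) pe (c1 c2 : 'I_k -> int) :
  in_F e -> (forall i j, e (vs i) (vs j) = pe i j) -> injective vs ->
  \sum_i \sum_j c1 i * c2 j * Nlow pe i j = 0 ->
  \sum_i \sum_j c2 i * c1 j * Nlow pe i j = 0 ->
  \sum_i \sum_j c1 i * c1 j * Nlow pe i j < 0 ->
  \sum_i \sum_j c2 i * c2 j * Nlow pe i j < 0 -> False.
Proof.
move=> hF hp hinj h12 h21 h11 h22.
have qfE : forall a b, qf (adj_mx e + 1%:M) (zrow vs a) (zrow vs b) =
    (\sum_i \sum_j a i * b j * Nlow pe i j)%:~R.
  move=> a b; rewrite qf_zrow -sum_int_cast; apply: eq_bigr => i _.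
  apply: eq_bigr => j _; congr (_ * _).
  by rewrite !mxE hp (inj_eq hinj) /Nlow rmorphD /= !rmorph_nat.
apply: (lower_bound (u := zrow vs c1) (w := zrow vs c2) hF); rewrite qfE;
  by rewrite ?h12 ?h21 ?ltrz0.
Qed.

Lemma upper_cert n (e : rel 'I_n) k (vs : 'I_k -> 'I_n) pe (c1 c2 : 'I_k -> int) :
  in_F e -> (forall i j, e (vs i) (vs j) = pe i j) -> injective vs ->
  \sum_i \sum_j c1 i * c2 j * Nup pe i j = 0 ->
  \sum_i \sum_j c2 i * c1 j * Nup pe i j = 0 ->
  \sum_i \sum_j c1 i * c1 j * Nup pe i j < 0 ->
  \sum_i \sum_j c2 i * c2 j * Nup pe i j < 0 -> False.
Proof.
move=> hF hp hinj h12 h21 h11 h22.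
have qfE : forall a b, qf (2%:M - adj_mx e) (zrow vs a) (zrow vs b) =
    (\sum_i \sum_j a i * b j * Nup pe i j)%:~R.
  move=> a b; rewrite qf_zrow -sum_int_cast; apply: eq_bigr => i _.
  apply: eq_bigr => j _; congr (_ * _).
  rewrite !mxE hp (inj_eq hinj) /Nup rmorphB /= rmorphMn !rmorph_nat; congr (_ - _).
  by case: (i == j); rewrite /= ?mulr0n ?mul0rn ?mulr1n.
apply: (upper_bound (u := zrow vs c1) (w := zrow vs c2) hF); rewrite qfE;
  by rewrite ?h12 ?h21 ?ltrz0.
Qed.


Definition peP3 (i j : 'I_5) : bool :=
  nth false (nth [::] [:: [:: false; true; false; true; false];
                          [:: true; false; true; true; false];
                          [:: false; true; false; true; false];
                          [:: true; true; true; false; true];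
                          [:: false; false; false; true; false]] i) j.
Definition c1P3 (i : 'I_5) : int := nth 0 [:: -1; 1; -1; 0; 0] i.
Definition c2P3 (i : 'I_5) : int := nth 0 [:: 0; -1; 0; 1; -1] i.

Lemma P3_sums :
  [/\ \sum_i \sum_j c1P3 i * c2P3 j * Nlow peP3 i j = 0,
      \sum_i \sum_j c2P3 i * c1P3 j * Nlow peP3 i j = 0,
      \sum_i \sum_j c1P3 i * c1P3 j * Nlow peP3 i j < 0 &
      \sum_i \sum_j c2P3 i * c2P3 j * Nlow peP3 i j < 0].
Proof. by split; rewrite !big_ord_recr !big_ord0; vm_compute. Qed.

Definition peT (i j : 'I_8) : bool :=
  nth false (nth [::] [:: [:: false; true; true; true; false; false; false; false];
                          [:: true; false; true; true; false; false; false; false];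
                          [:: true; true; false; true; false; false; false; false];
                          [:: true; true; true; false; true; true; true; true];
                          [:: false; false; false; true; false; true; true; true];
                          [:: false; false; false; true; true; false; true; true];
                          [:: false; false; false; true; true; true; false; true];
                          [:: false; false; false; true; true; true; true; false]] i) j.
Definition c1T (i : 'I_8) : int := nth 0 [:: 0; 0; 0; 0; 1; 1; 1; 1] i.
Definition c2T (i : 'I_8) : int := nth 0 [:: 2; 2; 2; 1; -1; -1; -1; -1] i.

Lemma T_sums :
  [/\ \sum_i \sum_j c1T i * c2T j * Nup peT i j = 0,
      \sum_i \sum_j c2T i * c1T j * Nup peT i j = 0,
      \sum_i \sum_j c1T i * c1T j * Nup peT i j < 0 &
      \sum_i \sum_j c2T i * c2T j * Nup peT i j < 0].
Proof. Time by split; rewrite !big_ord_recr !big_ord0; vm_compute. Qed.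

Close Scope ring_scope.

Lemma struct_lemma n (e : rel 'I_n) (S : {set 'I_n}) (bnd : nat) :
  symmetric e -> bnd <= 3 ->
  (forall p q r, p \in S -> q \in S -> r \in S -> e p q -> e q r -> p != r -> e p r) ->
  (forall K : {set 'I_n}, K \subset S -> is_clique e K -> #|K| <= bnd) ->
  exists l k m, union_K123 e S l k m /\ (bnd <= 1 -> k = 0) /\ (bnd <= 2 -> m = 0).
Proof.
move=> se b3 tr cl.
pose blk x := [set y in S | (y == x) || e x y].
pose P := [set blk x | x in S].
have blk_self : forall x, x \in S -> x \in blk x.
  by move=> x xS; rewrite inE xS eqxx.
have blk_sub : forall x, blk x \subset S.
  by move=> x; apply/subsetP => y; rewrite inE => /andP [].
have eqv : forall x y, x \in S -> y \in blk x -> blk y = blk x.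
  move=> x y xS; rewrite inE => /andP [yS /orP [/eqP -> // | exy]].
  apply/setP => z; rewrite !inE; case zS: (z \in S) => //=.
  apply/idP/idP.
  - case/orP => [/eqP -> | eyz]; first by rewrite exy orbT.
    case: (eqVneq z x) => [-> | zx]; first by []. 
    by rewrite (tr x y z) ?orbT // eq_sym.
  - case/orP => [/eqP -> | exz]; first by rewrite se exy orbT.
    case: (eqVneq z y) => [-> | zy]; first by []. 
    by rewrite (tr y x z) // ?orbT //; [rewrite se | rewrite eq_sym].
have blk_clique : forall x, x \in S -> is_clique e (blk x).
  move=> x xS; apply/forallP => y; apply/implyP => yB; apply/forallP => z.
  apply/implyP => zB; apply/implyP => yz.
  move: yB zB; rewrite !inE => /andP [yS /orP [/eqP ey | exy]] /andP [zS /orP [/eqP ez | exz]].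
  - by move: yz; rewrite ey ez eqxx.
  - by rewrite ey.
  - by rewrite ez se.
  - by apply: (tr y x z) => //; rewrite se.
exists #|[set B in P | #|B| == 1]|, #|[set B in P | #|B| == 2]|, #|[set B in P | #|B| == 3]|.
have PB : forall B, B \in P -> exists2 x, x \in S & B = blk x.
  by move=> B /imsetP [x xS ->]; exists x.
have cardB : forall B, B \in P -> #|B| <= bnd.
  move=> B /PB [x xS ->]; apply: cl; [exact: blk_sub | exact: blk_clique].
split; last split.
- exists P; split => //.
  + apply/and3P; split.
    * apply/eqP/setP => z; apply/bigcupP/idP.
        by case=> B /PB [x xS ->] zB; move/subsetP: (blk_sub x); apply.
      by move=> zS; exists (blk z); [apply: imset_f | apply: blk_self].
    * apply/trivIsetP => B1 B2 /PB [x1 x1S ->] /PB [x2 x2S ->] neq.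
      apply/pred0P => z /=; apply/negP => /andP [z1 z2].
      by move: neq; rewrite -(eqv _ _ x1S z1) -(eqv _ _ x2S z2) eqxx.
    * apply/imsetP => [[x xS eq0]].
      by move: (blk_self x xS); rewrite -eq0 inE.
  + move=> B BP; have [x xS defB] := PB B BP.
    rewrite defB blk_clique //= card_gt0; apply/andP; split.
      by apply/set0Pn; exists x; apply: blk_self.
    by rewrite -defB (leq_trans (cardB B BP)).
  + move=> B1 B2 /PB [x1 x1S ->] /PB [x2 x2S ->] neq y z y1 z2.
    apply/negP => eyz.
    have yS : y \in S by move/subsetP: (blk_sub x1); apply.
    have zy : z \in blk y by rewrite inE eyz orbT andbT; move/subsetP: (blk_sub x2); apply.
    move: neq; rewrite -(eqv _ _ x1S y1) -(eqv _ _ x2S z2) -(eqv _ _ yS zy) eqxx.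
    by [].
- move=> b1; apply/eqP; rewrite cards_eq0; apply/eqP/setP => B.
  rewrite !inE; apply/negbTE/andP => [[BP /eqP c2]].
  by have := cardB B BP; rewrite c2 => /leq_trans /(_ b1).
- move=> b2; apply/eqP; rewrite cards_eq0; apply/eqP/setP => B.
  rewrite !inE; apply/negbTE/andP => [[BP /eqP c2]].
  by have := cardB B BP; rewrite c2 => /leq_trans /(_ b2).
Qed.


Lemma adj_neq n (e : rel 'I_n) a b : irreflexive e -> e a b -> (a == b) = false.
Proof. by move=> ie eab; apply/negbTE; apply: contraTneq eab => ->; rewrite ie. Qed.

Lemma cliqueP n (e : rel 'I_n) K a b : is_clique e K -> a \in K -> b \in K -> a != b -> e a b.
Proof.
move=> Kcl aK bK ab; move/forallP: Kcl => /(_ a); rewrite aK /= => /forallP /(_ b).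
by rewrite bK ab.
Qed.

Lemma side_lemma n (e : rel 'I_n) (C X Y : {set 'I_n}) :
  in_F e -> max_clique e C ->
  X :|: Y = C -> X :&: Y = set0 -> X != set0 -> Y != set0 ->
  [/\ (#|Y| = 1 -> exists l, union_K123 e (Gamma e C X) l 0 0),
      (#|Y| = 2 -> exists l k, union_K123 e (Gamma e C X) l k 0),
      (#|Y| = 3 -> exists l k m, union_K123 e (Gamma e C X) l k m) &
      (4 <= #|Y| -> exists l k, union_K123 e (Gamma e C X) l k 0)].
Proof.
move=> hF [Ccl Cmax] defC XY0 X0 Y0.
have [[se ie] _] := hF.
set S := Gamma e C X.
have XC : X \subset C by rewrite -defC subsetUl.
have YC : Y \subset C by rewrite -defC subsetUr.
have inX : forall x, x \in X -> x \in C by move=> x; move/subsetP: XC; apply.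
have inY : forall y, y \in Y -> y \in C by move=> y; move/subsetP: YC; apply.
have inS : forall v, v \in S -> v \notin C /\ forall u, u \in C -> e v u = (u \in X).
  move=> v; rewrite inE => /andP [vC /eqP hN]; split => // u uC.
  by rewrite -hN inE uC.
have SX : forall v x, v \in S -> x \in X -> e v x.
  by move=> v x /inS [_ h] xX; rewrite h // inX.
have XnY : forall y, y \in Y -> y \in X = false.
  move=> y yY; apply/negbTE/negP => yX.
  have : y \in X :&: Y by rewrite inE yX.
  by rewrite XY0 inE.
have SY : forall v y, v \in S -> y \in Y -> e v y = false.
  by move=> v y /inS [_ h] yY; rewrite h ?inY // XnY.
have Cadj : forall a b, a \in C -> b \in C -> a != b -> e a b.
  move=> a b aC bC ab; move/forallP: Ccl => /(_ a); rewrite aC /= => /forallP /(_ b).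
  by rewrite bC ab.
have SnC : forall v c, v \in S -> c \in C -> (v == c) = false.
  move=> v c /inS [vC _] cC; apply/negbTE; apply: contraNneq vC => ->; exact: cC.
have XYn : forall x y, x \in X -> y \in Y -> (x == y) = false.
  move=> x y xX yY; apply/negbTE; apply: contraFneq (XnY y yY) => <-; exact: xX.
have cardC : #|C| = (#|X| + #|Y|)%N.
  by rewrite -defC cardsU XY0 cards0 subn0.
have clb : forall K : {set 'I_n}, K \subset S -> is_clique e K -> #|K| <= #|Y|.
  move=> K KS Kcl.
  have inK : forall k, k \in K -> k \in S by move=> k; move/subsetP: KS; apply.
  have XK0 : X :&: K = set0.
    apply/setP => z; rewrite !inE; apply/negbTE/andP => [[zX zK]].
    by have [zC _] := inS z (inK z zK); rewrite (inX z zX) in zC.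
  have cl : is_clique e (X :|: K).
    apply/forallP => a; apply/implyP; rewrite inE => aXK; apply/forallP => b.
    apply/implyP; rewrite inE => bXK; apply/implyP => ab.
    case/orP: aXK => [aX | aK]; case/orP: bXK => [bX | bK].
    - by apply: Cadj => //; exact: inX.
    - by rewrite se SX // inK.
    - by rewrite SX // inK.
    - by move/forallP: Kcl => /(_ a); rewrite aK /= => /forallP /(_ b); rewrite bK ab.
  have := Cmax _ cl; rewrite cardsU XK0 cards0 subn0 cardC.
  by rewrite leq_add2l.
have noP3 : forall p q r, p \in S -> q \in S -> r \in S -> e p q -> e q r -> p != r -> e p r.
  move=> p q r pS qS rS epq eqr pr; apply/negPn/negP => npr.
  have /set0Pn [x xX] := X0; have /set0Pn [y yY] := Y0.
  have [s12 s21 s11 s22] := P3_sums.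
  have xC := inX x xX; have yC := inY y yY.
  have f1 := negbTE npr.
  have f2 := SX p x pS xX; have f3 := SX q x qS xX; have f4 := SX r x rS xX.
  have f5 := SY p y pS yY; have f6 := SY q y qS yY; have f7 := SY r y rS yY.
  have dxy := XYn x y xX yY.
  have f8 : e x y by apply: Cadj => //; rewrite dxy.
  have d1 := adj_neq ie epq; have d2 := adj_neq ie eqr; have d3 := negbTE pr.
  have d4 := SnC p x pS xC; have d5 := SnC q x qS xC; have d6 := SnC r x rS xC.
  have d7 := SnC p y pS yC; have d8 := SnC q y qS yC; have d9 := SnC r y rS yC.
  apply: (lower_cert (vs := fun i : 'I_5 => nth p [:: p; q; r; x; y] i)
                     (pe := peP3) (c1 := c1P3) (c2 := c2P3) hF) => //.
  - move=> [[|[|[|[|[|//]]]]] ?] [[|[|[|[|[|//]]]]] ?]; rewrite /peP3 /=;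
      by rewrite ?ie ?(epq, eqr, f1, f2, f3, f4, f5, f6, f7, f8) // se
                 ?(epq, eqr, f1, f2, f3, f4, f5, f6, f7, f8).
  - move=> [[|[|[|[|[|//]]]]] ?] [[|[|[|[|[|//]]]]] ?] /= h;
      first [by apply: val_inj | by move/eqP: h; rewrite ?(d1,d2,d3,d4,d5,d6,d7,d8,d9,dxy) // eq_sym ?(d1,d2,d3,d4,d5,d6,d7,d8,d9,dxy)].
have notri : 4 <= #|Y| -> forall t1 t2 t3, t1 \in S -> t2 \in S -> t3 \in S ->
    e t1 t2 -> e t2 t3 -> e t1 t3 -> False.
  move=> Y4 t1 t2 t3 t1S t2S t3S e12 e23 e13.
  have /set0Pn [x xX] := X0; have xC := inX x xX.
  have szy : 4 <= size (enum Y) by rewrite -cardE.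
  have ymem : forall i, i < 4 -> nth x (enum Y) i \in Y.
    by move=> i hi; rewrite -mem_enum mem_nth // (leq_trans hi).
  have ydiff : forall i j, i < 4 -> j < 4 -> (nth x (enum Y) i == nth x (enum Y) j) = (i == j).
    by move=> i j hi hj; rewrite nth_uniq ?enum_uniq // (leq_trans _ szy).
  set y0 := nth x (enum Y) 0.
  have y0Y : y0 \in Y by apply: ymem.
  have y0C := inY y0 y0Y.
  set y1 := nth x (enum Y) 1.
  have y1Y : y1 \in Y by apply: ymem.
  have y1C := inY y1 y1Y.
  set y2 := nth x (enum Y) 2.
  have y2Y : y2 \in Y by apply: ymem.
  have y2C := inY y2 y2Y.
  set y3 := nth x (enum Y) 3.
  have y3Y : y3 \in Y by apply: ymem.
  have y3C := inY y3 y3Y.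
  have [s12 s21 s11 s22] := T_sums.
  have g1 : e t1 t2 by exact: e12.
  have g2 : e t2 t3 by exact: e23.
  have g3 : e t1 t3 by exact: e13.
  have h4 : (t1 == t2) = false by exact: adj_neq ie e12.
  have h5 : (t2 == t3) = false by exact: adj_neq ie e23.
  have h6 : (t1 == t3) = false by exact: adj_neq ie e13.
  have g7 : e t1 x by apply: SX.
  have h8 : (t1 == x) = false by apply: SnC.
  have g9 : e t1 y0 = false by apply: SY.
  have h10 : (t1 == y0) = false by apply: SnC.
  have g11 : e t1 y1 = false by apply: SY.
  have h12 : (t1 == y1) = false by apply: SnC.
  have g13 : e t1 y2 = false by apply: SY.
  have h14 : (t1 == y2) = false by apply: SnC.
  have g15 : e t1 y3 = false by apply: SY.
  have h16 : (t1 == y3) = false by apply: SnC.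
  have g17 : e t2 x by apply: SX.
  have h18 : (t2 == x) = false by apply: SnC.
  have g19 : e t2 y0 = false by apply: SY.
  have h20 : (t2 == y0) = false by apply: SnC.
  have g21 : e t2 y1 = false by apply: SY.
  have h22 : (t2 == y1) = false by apply: SnC.
  have g23 : e t2 y2 = false by apply: SY.
  have h24 : (t2 == y2) = false by apply: SnC.
  have g25 : e t2 y3 = false by apply: SY.
  have h26 : (t2 == y3) = false by apply: SnC.
  have g27 : e t3 x by apply: SX.
  have h28 : (t3 == x) = false by apply: SnC.
  have g29 : e t3 y0 = false by apply: SY.
  have h30 : (t3 == y0) = false by apply: SnC.
  have g31 : e t3 y1 = false by apply: SY.
  have h32 : (t3 == y1) = false by apply: SnC.
  have g33 : e t3 y2 = false by apply: SY.
  have h34 : (t3 == y2) = false by apply: SnC.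
  have g35 : e t3 y3 = false by apply: SY.
  have h36 : (t3 == y3) = false by apply: SnC.
  have h37 : (x == y0) = false by apply: XYn.
  have g38 : e x y0 by apply: Cadj => //; rewrite XYn.
  have h39 : (x == y1) = false by apply: XYn.
  have g40 : e x y1 by apply: Cadj => //; rewrite XYn.
  have h41 : (x == y2) = false by apply: XYn.
  have g42 : e x y2 by apply: Cadj => //; rewrite XYn.
  have h43 : (x == y3) = false by apply: XYn.
  have g44 : e x y3 by apply: Cadj => //; rewrite XYn.
  have h45 : (y0 == y1) = false by rewrite /y0 /y1 ydiff.
  have g46 : e y0 y1 by apply: Cadj => //; rewrite /y0 /y1 ydiff.
  have h47 : (y0 == y2) = false by rewrite /y0 /y2 ydiff.
  have g48 : e y0 y2 by apply: Cadj => //; rewrite /y0 /y2 ydiff.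
  have h49 : (y0 == y3) = false by rewrite /y0 /y3 ydiff.
  have g50 : e y0 y3 by apply: Cadj => //; rewrite /y0 /y3 ydiff.
  have h51 : (y1 == y2) = false by rewrite /y1 /y2 ydiff.
  have g52 : e y1 y2 by apply: Cadj => //; rewrite /y1 /y2 ydiff.
  have h53 : (y1 == y3) = false by rewrite /y1 /y3 ydiff.
  have g54 : e y1 y3 by apply: Cadj => //; rewrite /y1 /y3 ydiff.
  have h55 : (y2 == y3) = false by rewrite /y2 /y3 ydiff.
  have g56 : e y2 y3 by apply: Cadj => //; rewrite /y2 /y3 ydiff.
  apply: (upper_cert (vs := fun i : 'I_8 => nth t1 [:: t1; t2; t3; x; y0; y1; y2; y3] i)
                     (pe := peT) (c1 := c1T) (c2 := c2T) hF) => //.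
  - move=> [[|[|[|[|[|[|[|[|//]]]]]]]] ?] [[|[|[|[|[|[|[|[|//]]]]]]]] ?]; rewrite /peT /=;
      by rewrite ?ie ?(g1, g2, g3, g7, g9, g11, g13, g15, g17, g19, g21, g23, g25, g27, g29, g31, g33, g35, g38, g40, g42, g44, g46, g48, g50, g52, g54, g56) // se ?(g1, g2, g3, g7, g9, g11, g13, g15, g17, g19, g21, g23, g25, g27, g29, g31, g33, g35, g38, g40, g42, g44, g46, g48, g50, g52, g54, g56).
  - move=> [[|[|[|[|[|[|[|[|//]]]]]]]] ?] [[|[|[|[|[|[|[|[|//]]]]]]]] ?] /= h;
      first [by apply: val_inj | by move/eqP: h; rewrite ?(h4, h5, h6, h8, h10, h12, h14, h16, h18, h20, h22, h24, h26, h28, h30, h32, h34, h36, h37, h39, h41, h43, h45, h47, h49, h51, h53, h55) // eq_sym ?(h4, h5, h6, h8, h10, h12, h14, h16, h18, h20, h22, h24, h26, h28, h30, h32, h34, h36, h37, h39, h41, h43, h45, h47, h49, h51, h53, h55)].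
have clb2 : 4 <= #|Y| -> forall K : {set 'I_n}, K \subset S -> is_clique e K -> #|K| <= 2.
  move=> Y4 K KS Kcl; rewrite leqNgt; apply/negP => K3.
  have /set0Pn [x xX] := X0.
  have inK : forall i, i < 3 -> nth x (enum K) i \in K.
    by move=> i hi; rewrite -mem_enum mem_nth // -cardE (leq_trans hi).
  have kdiff : forall i j, i < 3 -> j < 3 -> (nth x (enum K) i == nth x (enum K) j) = (i == j).
    by move=> i j hi hj; rewrite nth_uniq ?enum_uniq // -cardE (leq_trans _ K3).
  have kS : forall i, i < 3 -> nth x (enum K) i \in S.
    by move=> i hi; move/subsetP: KS; apply; apply: inK.
  apply: (notri Y4 (nth x (enum K) 0) (nth x (enum K) 1) (nth x (enum K) 2));
    rewrite ?kS //; apply: (cliqueP Kcl); rewrite ?inK ?kdiff //.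
split.
- move=> b1.
  have [l [k [m [U [hk hm]]]]] := @struct_lemma n e S 1 se erefl noP3
     (fun K KS Kcl => (leq_trans (clb K KS Kcl) (eq_leq b1))).
  by exists l; rewrite (hk erefl) (hm erefl) in U.
- move=> b2.
  have [l [k [m [U [hk hm]]]]] := @struct_lemma n e S 2 se erefl noP3
     (fun K KS Kcl => (leq_trans (clb K KS Kcl) (eq_leq b2))).
  by exists l, k; rewrite (hm erefl) in U.
- move=> b3.
  have [l [k [m [U [hk hm]]]]] := @struct_lemma n e S 3 se erefl noP3
     (fun K KS Kcl => (leq_trans (clb K KS Kcl) (eq_leq b3))).
  by exists l, k, m.
- move=> b4.
  have [l [k [m [U [hk hm]]]]] := @struct_lemma n e S 2 se erefl noP3 (clb2 b4).
  by exists l, k; rewrite (hm erefl) in U.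
Qed.

Theorem proposition4p3 (n : nat) (e : rel 'I_n) (C X Y : {set 'I_n}) :
  in_F e ->
  max_clique e C ->
  (forall D : {set 'I_n}, max_clique e D -> cut_size e C <= cut_size e D) ->
  X :|: Y = C -> X :&: Y = set0 -> X != set0 -> Y != set0 ->
  (forall v, v \notin C ->
     [\/ nbhd_in e C v = X, nbhd_in e C v = Y | nbhd_in e C v = set0]) ->
  let a := #|X| in let b := #|Y| in
  let GX := Gamma e C X in let GY := Gamma e C Y in
  [/\ (b = 1 -> exists l, union_K123 e GX l 0 0),
      (b = 2 -> exists l k, union_K123 e GX l k 0),
      (b = 3 -> exists l k m, union_K123 e GX l k m) &
      (4 <= b -> exists l k, union_K123 e GX l k 0)] /\
  [/\ (a = 1 -> exists l, union_K123 e GY l 0 0),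
      (a = 2 -> exists l k, union_K123 e GY l k 0),
      (a = 3 -> exists l k m, union_K123 e GY l k m) &
      (4 <= a -> exists l k, union_K123 e GY l k 0)].
Proof.
move=> hF hC _ hU hI hX hY _.
have h1 := side_lemma hF hC hU hI hX hY.
have h2 := side_lemma (X := Y) (Y := X) hF hC
  (etrans (setUC Y X) hU) (etrans (setIC Y X) hI) hY hX.
move=> a b GX GY; rewrite /a /b /GX /GY.
exact: (conj h1 h2).
Qed.
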